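(* Let $M$ be a transitive model of set theory, suppose $M\models$ ''$\langle X,\tau\rangle$ and $\langle Y,\sigma\rangle$ are regular Hausdorff spaces and $f\colon X\to Y$ is continuous'', and let $\pi\colon X\to\hat X$ and $\chi\colon Y\to\hat Y$ be interpretations over $M$. Then: (1) there is a unique continuous function $\hat f\colon\hat X\to\hat Y$ which contains the set $\{\langle\pi(x),\chi(y)\rangle: x\in X,\ y\in Y,\ f(x)=y\}$ as a subfunction; (2) this $\hat f$ satisfies: whenever $O\in\tau$ and $P\in\sigma$ are such that $f^{-1}P=O$, then $\hat f^{-1}\chi(P)=\pi(O)$.
   Context: $M\subseteq V$ is a transitive model of ZFC; spaces are $T_0$. For $M\models$ ''$\langle X,\tau\rangle$ is a topological space'', a preinterpretation over $M$ is a space $\langle\hat X,\hat\tau\rangle$ with maps $\pi\colon X\to\hat X$, $\pi\colon\tau\to\hat\tau$ such that: $x\in O\iff\pi(x)\in\pi(O)$ for $x\in X,O\in\tau$; $\pi$ commutes with finite intersections and with arbitrary unions that exist in $M$ (if $M\models O=\bigcup_{i\in I}O_i$ then $\pi(O)=\bigcup_{i\in I}\pi(O_i)$); $\pi(\emptyset)=\emptyset$, $\pi(X)=\hat X$; and $\pi''\tau$ is a basis of $\hat\tau$. $\pi_0\le\pi_1$ if there is $h\colon\hat X_0\to\hat X_1$ with $\pi_1=h\circ\pi_0$ on points and $h^{-1}\pi_1(O)=\pi_0(O)$ for $O\in\tau$. An interpretation is a $\le$-largest preinterpretation. *)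

(* Defs.v *)
(* The ambient metatheory (Rocq + classical axioms) plays the
   role of the universe V.  The model M is a class M : U -> Prop of an
   abstract membership structure (U, mem), transitive w.r.t. mem and
   satisfying (the relativization of) every axiom of ZFC. *)
From Stdlib Require Import Classical.
Set Implicit Arguments.

Inductive form : Type :=
| fMem : nat -> nat -> form
| fEq  : nat -> nat -> form
| fNeg : form -> form
| fAnd : form -> form -> form
| fEx  : form -> form.

Definition scons {A : Type} (a : A) (e : nat -> A) : nat -> A :=
  fun n => match n with 0 => a | S k => e k end.

Section Model.
Variables (U : Type) (mem : U -> U -> Prop) (M : U -> Prop).

Fixpoint sat (e : nat -> U) (p : form) : Prop :=
  match p with
  | fMem i j => mem (e i) (e j)
  | fEq i j => e i = e j
  | fNeg q => ~ sat e q
  | fAnd q r => sat e q /\ sat e r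
  | fEx q => exists u, M u /\ sat (scons u e) q
  end.

Definition envM (e : nat -> U) : Prop := forall n, M (e n).

Definition transitive_class : Prop :=
  forall x y, M x -> mem y x -> M y.

Record ZFC_model : Prop := {
  zf_ext : forall a b, M a -> M b ->
      (forall z, M z -> (mem z a <-> mem z b)) -> a = b;
  zf_found : forall a, M a -> (exists x, M x /\ mem x a) ->
      exists x, M x /\ mem x a /\ forall z, M z -> mem z x -> ~ mem z a;
  zf_pair : forall a b, M a -> M b -> exists c, M c /\ mem a c /\ mem b c;
  zf_union : forall a, M a -> exists u, M u /\
      forall y z, M y -> M z -> mem y a -> mem z y -> mem z u;
  zf_power : forall a, M a -> exists p, M p /\
      forall x, M x -> (forall z, M z -> mem z x -> mem z a) -> mem x p;
  zf_inf : exists w, M w /\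
      (exists e, M e /\ mem e w /\ forall z, M z -> ~ mem z e) /\
      (forall x, M x -> mem x w -> exists s, M s /\ mem s w /\
          forall z, M z -> (mem z s <-> mem z x \/ z = x));
  zf_sep : forall (p : form) (e : nat -> U) a, envM e -> M a ->
      exists b, M b /\ forall x, M x -> (mem x b <-> mem x a /\ sat (scons x e) p);
  zf_repl : forall (p : form) (e : nat -> U) a, envM e -> M a ->
      (forall x, M x -> mem x a -> exists y, M y /\ sat (scons y (scons x e)) p /\
          forall y', M y' -> sat (scons y' (scons x e)) p -> y' = y) ->
      exists b, M b /\ forall x, M x -> mem x a ->
          exists y, M y /\ mem y b /\ sat (scons y (scons x e)) p;
  zf_choice : forall a, M a ->
      (forall x, M x -> mem x a -> exists z, M z /\ mem z x) ->
      (forall x y, M x -> M y -> mem x a -> mem y a -> x <> y ->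
          forall z, M z -> ~ (mem z x /\ mem z y)) ->
      exists c, M c /\ forall x, M x -> mem x a ->
          exists z, M z /\ mem z x /\ mem z c /\
            forall z', M z' -> mem z' x -> mem z' c -> z' = z
}.

Definition transitive_model_ZFC : Prop := transitive_class /\ ZFC_model.

(* ---------- notions inside M (written out; absolute by transitivity) ---------- *)
Definition M_topology (X tau : U) : Prop :=
  M X /\ M tau /\
  (forall O, mem O tau -> forall z, mem z O -> mem z X) /\
  mem X tau /\
  (exists E, mem E tau /\ forall z, ~ mem z E) /\
  (forall O1 O2, mem O1 tau -> mem O2 tau ->
     exists W, mem W tau /\ forall z, mem z W <-> mem z O1 /\ mem z O2) /\
  (forall F, M F -> (forall O, mem O F -> mem O tau) ->
     exists W, mem W tau /\ forall z, mem z W <-> exists O, mem O F /\ mem z O).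

Definition M_hausdorff (X tau : U) : Prop :=
  forall x y, mem x X -> mem y X -> x <> y ->
    exists A B, mem A tau /\ mem B tau /\ mem x A /\ mem y B /\
      forall z, ~ (mem z A /\ mem z B).

Definition M_regular (X tau : U) : Prop :=
  forall x O, mem x X -> mem O tau -> mem x O ->
    exists A B, mem A tau /\ mem B tau /\ mem x A /\
      (forall z, mem z X -> ~ mem z O -> mem z B) /\
      forall z, ~ (mem z A /\ mem z B).

Definition M_regular_hausdorff_space (X tau : U) : Prop :=
  M_topology X tau /\ M_hausdorff X tau /\ M_regular X tau.

Definition is_kpair (p a b : U) : Prop :=
  forall z, mem z p <->
    ((forall w, mem w z <-> w = a) \/ (forall w, mem w z <-> w = a \/ w = b)).

Definition fapp (f x y : U) : Prop := exists p, mem p f /\ is_kpair p x y.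

Definition M_function (f X Y : U) : Prop :=
  M f /\
  (forall p, mem p f -> exists a b, is_kpair p a b /\ mem a X /\ mem b Y) /\
  (forall a, mem a X -> exists b, mem b Y /\ fapp f a b /\
     forall b', fapp f a b' -> b' = b).

Definition preim_eq (f X O P : U) : Prop :=
  forall x, mem x O <-> mem x X /\ exists y, fapp f x y /\ mem y P.

Definition M_continuous (f X tau Y sigma : U) : Prop :=
  M_function f X Y /\
  forall P, mem P sigma -> exists O, mem O tau /\ preim_eq f X O P.

End Model.

Definition is_topology {T : Type} (t : (T -> Prop) -> Prop) : Prop :=
  t (fun _ => True) /\
  (forall A B, t A -> t B -> t (fun p => A p /\ B p)) /\
  (forall F : (T -> Prop) -> Prop, (forall A, F A -> t A) ->
      t (fun p => exists A, F A /\ A p)).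

Definition is_T0 {T : Type} (t : (T -> Prop) -> Prop) : Prop :=
  forall p q : T, p <> q -> exists A, t A /\ ~ (A p <-> A q).

Definition continuous_map {S T : Type} (s : (S -> Prop) -> Prop)
  (t : (T -> Prop) -> Prop) (g : S -> T) : Prop :=
  forall B, t B -> s (fun p => B (g p)).

Record Interp (U : Type) := {
  carrier : Type;
  topo : (carrier -> Prop) -> Prop;
  pi_pt : U -> carrier;            (* pi on points (only used on x in X) *)
  pi_op : U -> carrier -> Prop     (* pi on open sets (only used on O in tau) *)
}.

Section Interpretations.
Variables (U : Type) (mem : U -> U -> Prop) (M : U -> Prop) (X tau : U).

Definition preinterpretation (P : Interp U) : Prop :=
  is_topology (topo P) /\ is_T0 (topo P) /\
  (forall x O, mem x X -> mem O tau -> (mem x O <-> pi_op P O (pi_pt P x))) /\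
  (forall O1 O2 W, mem O1 tau -> mem O2 tau -> mem W tau ->
     (forall z, mem z W <-> mem z O1 /\ mem z O2) ->
     forall p, pi_op P W p <-> pi_op P O1 p /\ pi_op P O2 p) /\
  (forall F O, M F -> (forall Q, mem Q F -> mem Q tau) -> mem O tau ->
     (forall z, mem z O <-> exists Q, mem Q F /\ mem z Q) ->
     forall p, pi_op P O p <-> exists Q, mem Q F /\ pi_op P Q p) /\
  (forall E, mem E tau -> (forall z, ~ mem z E) -> forall p, ~ pi_op P E p) /\
  (forall p, pi_op P X p) /\
  (forall O, mem O tau -> topo P (pi_op P O)) /\
  (forall W, topo P W -> forall p, W p ->
     exists O, mem O tau /\ pi_op P O p /\ forall q, pi_op P O q -> W q).

Definition interp_le (P0 P1 : Interp U) : Prop :=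
  exists h : carrier P0 -> carrier P1,
    (forall x, mem x X -> pi_pt P1 x = h (pi_pt P0 x)) /\
    (forall O, mem O tau -> forall p, pi_op P1 O (h p) <-> pi_op P0 O p).

Definition interpretation (P : Interp U) : Prop :=
  preinterpretation P /\
  forall Q : Interp U, preinterpretation Q -> interp_le Q P.

End Interpretations.

(* Main.v *)
Require Import Defs.
From Stdlib Require Import Classical Setoid Morphisms FunctionalExtensionality PropExtensionality ProofIrrelevance.

Definition fOr p q := fNeg (fAnd (fNeg p) (fNeg q)).
Definition fImp p q := fNeg (fAnd p (fNeg q)).
Definition fIff p q := fAnd (fImp p q) (fImp q p).
Definition fAll p := fNeg (fEx (fNeg p)).

Section S.
Context {U : Type} (mem : U -> U -> Prop) (M : U -> Prop).
Lemma sat_neg e p : sat mem M e (fNeg p) <-> ~ sat mem M e p. Proof. reflexivity. Qed.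
Lemma sat_and e p q : sat mem M e (fAnd p q) <-> sat mem M e p /\ sat mem M e q. Proof. reflexivity. Qed.
Lemma sat_ex e p : sat mem M e (fEx p) <-> exists u, M u /\ sat mem M (scons u e) p. Proof. reflexivity. Qed.
Lemma sat_mem e i j : sat mem M e (fMem i j) <-> mem (e i) (e j). Proof. reflexivity. Qed.
Lemma sat_eq e i j : sat mem M e (fEq i j) <-> e i = e j. Proof. reflexivity. Qed.
Lemma sat_or e p q : sat mem M e (fOr p q) <-> sat mem M e p \/ sat mem M e q.
Proof. simpl. destruct (classic (sat mem M e p)); tauto. Qed.
Lemma sat_imp e p q : sat mem M e (fImp p q) <-> (sat mem M e p -> sat mem M e q).
Proof. simpl. destruct (classic (sat mem M e q)); tauto. Qed.
Lemma sat_iff e p q : sat mem M e (fIff p q) <-> (sat mem M e p <-> sat mem M e q).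
Proof. unfold fIff. rewrite sat_and, !sat_imp. tauto. Qed.
Lemma sat_all e p : sat mem M e (fAll p) <-> forall u, M u -> sat mem M (scons u e) p.
Proof. simpl. split.
- intros H u Hu. apply NNPP. intro C. apply H. exists u. auto.
- intros H [u [Hu C]]. apply C, H, Hu. Qed.
End S.

Definition KPf p a b := fAll (fIff (fMem 0 (S p)) (fOr (fAll (fIff (fMem 0 1) (fEq 0 (S (S a)))))
   (fAll (fIff (fMem 0 1) (fOr (fEq 0 (S (S a))) (fEq 0 (S (S b)))))))).

Definition KPM {U} (mem : U -> U -> Prop) (M : U -> Prop) p a b :=
  forall u, M u -> (mem u p <-> (forall w, M w -> (mem w u <-> w = a)) \/
                                (forall w, M w -> (mem w u <-> w = a \/ w = b))).

Lemma sat_KP {U} (mem : U -> U -> Prop) M e p a b :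
  sat mem M e (KPf p a b) <-> KPM mem M (e p) (e a) (e b).
Proof.
  unfold KPf, KPM. repeat (first [setoid_rewrite (sat_all mem M) | setoid_rewrite (sat_iff mem M) | setoid_rewrite sat_or
  | setoid_rewrite (sat_mem mem M) | setoid_rewrite (sat_eq mem M)]). simpl. reflexivity.
Qed.

Lemma pair_M {U} (mem : U -> U -> Prop) M a b :
  transitive_model_ZFC mem M -> M a -> M b ->
  exists s, M s /\ forall w, mem w s <-> w = a \/ w = b.
Proof.
  intros [Htr HZ] Ma Mb.
  destruct (zf_pair HZ a b Ma Mb) as [c [Mc [ac bc]]].
  destruct (zf_sep HZ (fOr (fEq 0 1) (fEq 0 2)) (e := scons a (scons b (fun _ => a))) c)
    as [s [Ms Hs]]; auto.
  { intros [|[|n]]; simpl; auto. }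
  exists s; split; auto. intro w; split.
  - intro ws. pose proof (Htr s w Ms ws) as Mw. apply Hs in ws; auto.
    destruct ws as [_ H]. rewrite sat_or in H. simpl in H. exact H.
  - intros [-> | ->]; apply Hs; auto; split; auto; rewrite sat_or; simpl; auto.
Qed.

Lemma kpair_to_KPM {U} (mem : U -> U -> Prop) M p a b :
  transitive_class mem M -> M a -> M b -> is_kpair mem p a b -> KPM mem M p a b.
Proof.
  intros Htr Ma Mb H u Mu. rewrite (H u).
  split; intros [H1|H2]; [left|right|left|right]; intros w.
  - intros Mw; apply H1.
  - intros Mw; apply H2.
  - split. intro wu. apply H1; eauto. intro; subst; apply H1; auto.
  - split. intro wu. apply H2; eauto. intros [-> | ->]; apply H2; auto.
Qed.

Lemma KPM_fapp {U} (mem : U -> U -> Prop) M f X Y p z y :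
  transitive_model_ZFC mem M -> M X -> M Y -> M_function mem M f X Y ->
  mem p f -> M z -> M y -> KPM mem M p z y -> fapp mem f z y.
Proof.
  intros HZ MX MY [Mf [Hfp _]] pf Mz My HK.
  pose proof HZ as [Htr _].
  destruct (Hfp p pf) as [a [b [kp [aX bY]]]].
  assert (Ma : M a) by eauto. assert (Mb : M b) by eauto.
  assert (Mp : M p) by eauto.
  destruct (pair_M _ _ _ _ HZ Ma Ma) as [sa [Msa Hsa]].
  destruct (pair_M _ _ _ _ HZ Ma Mb) as [sab [Msab Hsab]].
  destruct (pair_M _ _ _ _ HZ Mz My) as [szy [Mszy Hszy]].
  assert (sap : mem sa p). { apply kp. left. intro w. rewrite Hsa. tauto. }
  assert (sabp : mem sab p). { apply kp. right. intro w. rewrite Hsab. tauto. }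
  assert (szyp : mem szy p). { apply (proj2 (HK szy Mszy)). right. intros w Mw. apply Hszy. }
  assert (za : z = a).
  { apply HK in sap; auto. destruct sap as [H1|H2].
    - symmetry. apply H1; auto; apply Hsa; auto.
    - assert (mem z sa) by (apply H2; auto). apply Hsa in H; tauto. }
  subst z.
  assert (Hb : b = a \/ b = y).
  { apply HK in sabp; auto. destruct sabp as [H1|H2].
    - left. apply H1; auto; apply Hsab; auto.
    - apply H2; auto; apply Hsab; auto. }
  assert (Hy : y = a \/ y = b).
  { apply kp in szyp. destruct szyp as [H1|H2].
    - left. apply H1; apply Hszy; auto.
    - apply H2; apply Hszy; auto. }
  assert (y = b) by (destruct Hb; destruct Hy; congruence).
  subst y. exists p; auto.
Qed.

Lemma pts_eq {U} (mem : U -> U -> Prop) M Y sigma (P : Interp U) :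
  preinterpretation mem M Y sigma P -> forall a b,
  (forall Q, mem Q sigma -> (pi_op P Q a <-> pi_op P Q b)) -> a = b.
Proof.
  intros [_ [T0 [_ [_ [_ [_ [_ [_ basis]]]]]]]] a b H.
  apply NNPP; intro nab. destruct (T0 a b nab) as [A [oA HA]].
  destruct (classic (A a)) as [Aa|nAa].
  - destruct (basis A oA a Aa) as [O [Os [Oa OA]]].
    apply HA. split; auto. intros _. apply OA, H; auto.
  - assert (Ab : A b) by tauto.
    destruct (basis A oA b Ab) as [O [Os [Ob OA]]].
    apply nAa, OA, H; auto.
Qed.

Definition phiF := fEx (fAnd (fMem 0 2) (fAnd (fAll (fImp (fMem 0 4) (fImp (fNeg (fMem 0 5)) (fMem 0 1))))
   (fAll (fNeg (fAnd (fMem 0 2) (fMem 0 1)))))).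

Lemma haus {U} (mem : U -> U -> Prop) M Y sigma (PY : Interp U) :
  transitive_model_ZFC mem M -> M_topology mem M Y sigma -> M_regular mem Y sigma ->
  preinterpretation mem M Y sigma PY -> forall a b, a <> b ->
  exists A B, topo PY A /\ topo PY B /\ A a /\ B b /\ forall r, ~ (A r /\ B r).
Proof.
  intros HZ HT HR HP. pose proof HZ as [Htr HZF].
  destruct HT as [MY [Msig [sigY [Ysig [Esig [Isig Usig]]]]]].
  pose proof HP as [topY [T0Y [memY [intY [unY [empY [wholeY [basY basisY]]]]]]]].
  assert (sub : forall a b P, mem P sigma -> pi_op PY P a -> ~ pi_op PY P b ->
     exists A B, topo PY A /\ topo PY B /\ A a /\ B b /\ forall r, ~ (A r /\ B r)).
  { intros a b P Ps Pa nPb.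
    assert (MP : M P) by eauto.
    destruct (zf_sep HZF phiF (e := scons sigma (scons Y (scons P (fun _ => Y)))) sigma)
      as [F [MF HF]]; auto.
    { intros [|[|[|n]]]; simpl; auto. }
    assert (HF' : forall x, M x -> (mem x F <-> mem x sigma /\ exists B, M B /\ mem B sigma /\
        (forall z, M z -> mem z Y -> ~ mem z P -> mem z B) /\
        (forall z, M z -> ~ (mem z x /\ mem z B)))).
    { intros x Mx. rewrite (HF x Mx). unfold phiF.
      repeat (first [setoid_rewrite (sat_ex mem M) | setoid_rewrite (sat_and mem M)
        | setoid_rewrite (sat_all mem M) | setoid_rewrite (sat_imp mem M)
        | setoid_rewrite (sat_neg mem M) | setoid_rewrite (sat_mem mem M)]).
      simpl. reflexivity. }
    assert (Fs : forall Q, mem Q F -> mem Q sigma).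
    { intros Q QF. apply (HF' Q); eauto. }
    assert (UF : forall z, mem z P <-> exists Q, mem Q F /\ mem z Q).
    { intro z; split.
      - intro zP. assert (zY : mem z Y) by eauto.
        destruct (HR z P zY Ps zP) as [A [B [As [Bs [zA [Bcov disj]]]]]].
        exists A; split; auto. apply HF'; eauto. split; auto.
        exists B; split; [eauto|split; [auto|split; [intros z' _ zY' nzP; apply Bcov; auto | intros z' _; apply disj]]].
      - intros [Q [QF zQ]]. apply HF' in QF; eauto.
        destruct QF as [Qs [B [MB [Bs [Bcov disj]]]]].
        assert (zY : mem z Y) by eauto. assert (Mz : M z) by eauto.
        apply NNPP; intro nzP. apply (disj z Mz). split; auto. }
    apply (proj1 (unY F P MF Fs Ps UF a)) in Pa.
    destruct Pa as [A [AF Aa]].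
    assert (MA : M A) by eauto.
    apply HF' in AF; auto. destruct AF as [As [B [MB [Bs [Bcov disj]]]]].
    exists (pi_op PY A), (pi_op PY B). split; [|split]; auto. split; [auto|split].
    - destruct (pair_M _ _ _ _ HZ MP MB) as [s [Ms Hs]].
      assert (ss : forall Q, mem Q s -> mem Q sigma). { intros Q HQ. apply Hs in HQ. destruct HQ; subst; auto. }
      assert (Us : forall z, mem z Y <-> exists Q, mem Q s /\ mem z Q).
      { intro z; split.
        - intro zY. destruct (classic (mem z P)) as [zP|nzP].
          + exists P; split; auto; apply Hs; auto.
          + exists B; split; [apply Hs; auto|]. apply Bcov; eauto.
        - intros [Q [Qs zQ]]. apply Hs in Qs. destruct Qs; subst; eauto. }
      destruct (proj1 (unY s Y Ms ss Ysig Us b) (wholeY b)) as [Q [Qs Qb]].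
      apply Hs in Qs. destruct Qs; subst; tauto.
    - intros r [Ar Br].
      destruct (Isig A B As Bs) as [W [Ws HW]].
      apply (empY W Ws) with r.
      + intros z zW. assert (MW : M W) by (apply (Htr sigma W); auto). assert (M z) by (apply (Htr W z); auto). apply HW in zW. apply (disj z); tauto.
      + apply (intY A B W As Bs Ws HW r). auto. }
  intros a b nab. destruct (T0Y a b nab) as [A0 [oA HA]].
  destruct (classic (A0 a)) as [Aa|nAa].
  - destruct (basisY A0 oA a Aa) as [P [Ps [Pa PA]]].
    apply (sub a b P Ps Pa). intro Pb. apply HA. split; [auto | intros _; apply PA; auto].
  - assert (Ab : A0 b) by tauto.
    destruct (basisY A0 oA b Ab) as [P [Ps [Pb PA]]].
    destruct (sub b a P Ps Pb) as [A [B [oA' [oB [Ab' [Ba dis]]]]]].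
    { intro Pa. apply nAa, PA, Pa. }
    exists B, A. repeat split; auto. intros r [Br Ar]. apply (dis r); auto.
Qed.

Lemma open_local {T} (t : (T -> Prop) -> Prop) (W : T -> Prop) :
  is_topology t -> (forall p, W p -> exists A, t A /\ A p /\ forall q, A q -> W q) -> t W.
Proof.
  intros [_ [_ Hu]] H.
  assert (E : W = (fun p => exists A, (t A /\ forall q, A q -> W q) /\ A p)).
  { apply functional_extensionality; intro p; apply propositional_extensionality; split.
    - intro Wp. destruct (H p Wp) as [A [tA [Ap AW]]]. exists A; auto.
    - intros [A [[_ AW] Ap]]; auto. }
  rewrite E. apply Hu. intros A [tA _]; auto.
Qed.

Definition base {U} (mem : U -> U -> Prop) X tau f (PX PY : Interp U)
  (q : carrier PX + carrier PY) (P : U) : Prop :=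
  match q with
  | inl p => exists O, mem O tau /\ preim_eq mem f X O P /\ pi_op PX O p
  | inr r => pi_op PY P r
  end.

Definition phiG := fEx (fAnd (fMem 0 2) (fAll (fImp (fMem 0 2)
  (fEx (fAnd (fMem 0 2) (fEx (fAnd (fMem 0 6) (KPf 0 2 1)))))))).

Lemma sat_phiG {U} (mem : U -> U -> Prop) M F f O :
  sat mem M (scons O (scons F (scons f (fun _ => f)))) phiG <->
  exists Q, M Q /\ mem Q F /\ forall z, M z -> mem z O ->
    exists y, M y /\ mem y Q /\ exists p, M p /\ mem p f /\ KPM mem M p z y.
Proof.
  unfold phiG.
  repeat (first [setoid_rewrite (sat_KP mem M) | setoid_rewrite (sat_ex mem M) | setoid_rewrite (sat_and mem M)
        | setoid_rewrite (sat_all mem M) | setoid_rewrite (sat_imp mem M)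
        | setoid_rewrite (sat_neg mem M) | setoid_rewrite (sat_mem mem M)]).
  simpl. reflexivity.
Qed.

Theorem mainTheorem2 (U : Type) (mem : U -> U -> Prop) (M : U -> Prop)
  (X tau Y sigma f : U) (PX PY : Interp U) :
  transitive_model_ZFC mem M ->
  M_regular_hausdorff_space mem M X tau ->
  M_regular_hausdorff_space mem M Y sigma ->
  M_continuous mem M f X tau Y sigma ->
  interpretation mem M X tau PX ->
  interpretation mem M Y sigma PY ->
  exists fh : carrier PX -> carrier PY,
    (continuous_map (topo PX) (topo PY) fh /\
     (forall x y, mem x X -> mem y Y -> fapp mem f x y ->
        fh (pi_pt PX x) = pi_pt PY y)) /\
    (forall g : carrier PX -> carrier PY,
       continuous_map (topo PX) (topo PY) g ->
       (forall x y, mem x X -> mem y Y -> fapp mem f x y ->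
          g (pi_pt PX x) = pi_pt PY y) ->
       g = fh) /\
    (forall O P, mem O tau -> mem P sigma -> preim_eq mem f X O P ->
       forall p, pi_op PY P (fh p) <-> pi_op PX O p).
Proof.
  intros HZ HX HY Hf [PXpre PXmax] [PYpre PYmax].
  pose proof HZ as [Htr HZF].
  destruct HX as [HTX [_ HRX]]. destruct HY as [HTY [_ HRY]].
  pose proof HTX as [MX [Mtau [tauX [Xtau [Etau [Itau Utau]]]]]].
  pose proof HTY as [MY [Msig [sigY [Ysig [Esig [Isig Usig]]]]]].
  pose proof Hf as [[Mf [Hfp Hftot]] Hcont].
  pose proof PXpre as [topX [T0X [memX [intX [unX [empX [wholeX [basX basisX]]]]]]]].
  pose proof PYpre as [topY [T0Y [memY [intY [unY [empY [wholeY [basY basisY]]]]]]]].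
  assert (Mt : forall O, mem O tau -> M O) by (intros O H; apply (Htr tau O Mtau H)).
  assert (Ms : forall O, mem O sigma -> M O) by (intros O H; apply (Htr sigma O Msig H)).
  assert (MXe : forall x, mem x X -> M x) by (intros O H; apply (Htr X O MX H)).
  assert (MYe : forall x, mem x Y -> M x) by (intros O H; apply (Htr Y O MY H)).
  assert (pre_unique : forall O O' P, mem O tau -> mem O' tau ->
     preim_eq mem f X O P -> preim_eq mem f X O' P -> O = O').
  { intros O O' P Ot O't H1 H2. apply (zf_ext HZF); auto.
    intros z _. rewrite (H1 z), (H2 z). tauto. }
  set (bs := base mem X tau f PX PY).
  assert (base_inl : forall O P p, mem O tau -> preim_eq mem f X O P ->
     (bs (inl p) P <-> pi_op PX O p)).
  { intros O P p Ot HO. simpl. split.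
    - intros [O' [O't [HO' H]]]. rewrite (pre_unique O O' P); auto.
    - intro H. exists O; auto. }
  assert (fval : forall x, mem x X -> exists y, mem y Y /\ fapp mem f x y /\
     forall y', fapp mem f x y' -> y' = y) by exact Hftot.
  assert (sub_inl : forall O, mem O tau -> forall z, mem z O -> mem z X) by exact tauX.
  assert (base_int : forall q P1 P2 P12, mem P1 sigma -> mem P2 sigma -> mem P12 sigma ->
     (forall z, mem z P12 <-> mem z P1 /\ mem z P2) ->
     (bs q P12 <-> bs q P1 /\ bs q P2)).
  { intros [p|r] P1 P2 P12 s1 s2 s12 H12.
    - destruct (Hcont P1 s1) as [O1 [O1t H1]].
      destruct (Hcont P2 s2) as [O2 [O2t H2]].
      destruct (Hcont P12 s12) as [O12 [O12t H3]].
      rewrite (base_inl O1 P1 p), (base_inl O2 P2 p), (base_inl O12 P12 p); auto.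
      apply intX; auto. intro z. rewrite (H1 z), (H2 z), (H3 z). split.
      + intros [zX [y [fy yP]]]. apply H12 in yP. destruct yP. split; split; eauto.
      + intros [[zX [y1 [f1 y1P]]] [_ [y2 [f2 y2P]]]].
        destruct (fval z zX) as [y [_ [_ uy]]].
        rewrite (uy y1 f1) in y1P. rewrite (uy y2 f2) in y2P.
        split; auto. exists y; split. rewrite <- (uy y1 f1); auto. apply H12; auto.
    - simpl. apply intY; auto. }
  assert (base_Y : forall q, bs q Y).
  { intros [p|r].
    - rewrite (base_inl X); auto. intro x. split.
      + intro xX. split; auto. destruct (fval x xX) as [y [yY [fy _]]]. eauto.
      + tauto.
    - apply wholeY. }
  assert (base_E : forall q E, mem E sigma -> (forall z, ~ mem z E) -> ~ bs q E).
  { intros [p|r] E Es HE.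
    - destruct (Hcont E Es) as [O [Ot HO]].
      rewrite (base_inl O); auto. apply empX; auto.
      intros z zO. apply HO in zO. destruct zO as [_ [y [_ yE]]]. apply (HE y); auto.
    - apply empY; auto. }
  assert (base_U : forall q F O, M F -> (forall Q, mem Q F -> mem Q sigma) -> mem O sigma ->
     (forall z, mem z O <-> exists Q, mem Q F /\ mem z Q) ->
     (bs q O <-> exists Q, mem Q F /\ bs q Q)).
  { intros [p|r] F O MF Fs Os HO.
    2: { simpl. apply unY; auto. }
    destruct (Hcont O Os) as [Os' [Ost HOs]].
    destruct (zf_sep HZF phiG (e := scons F (scons f (fun _ => f))) tau) as [G [MG HG]]; auto.
    { intros [|[|n]]; simpl; auto. }
    assert (G1 : forall O', mem O' G -> mem O' tau /\ exists Q, mem Q F /\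
        forall z, mem z O' -> exists y, mem y Q /\ fapp mem f z y).
    { intros O' O'G. assert (MO' : M O') by (apply (Htr G O' MG O'G)).
      apply HG in O'G; auto. destruct O'G as [O't Hs]. apply sat_phiG in Hs.
      destruct Hs as [Q [MQ [QF HQ]]]. split; auto. exists Q; split; auto.
      intros z zO'. assert (Mz : M z) by (apply (Htr O' z MO' zO')).
      destruct (HQ z Mz zO') as [y [My [yQ [p0 [Mp [pf KP]]]]]].
      exists y; split; auto. apply (KPM_fapp _ _ _ _ _ _ _ _ HZ MX MY (proj1 Hf) pf Mz My KP). }
    assert (G2 : forall Q O', mem Q F -> mem O' tau -> preim_eq mem f X O' Q -> mem O' G).
    { intros Q O' QF O't HO'. apply HG; auto. split; auto. apply sat_phiG.
      assert (MQ : M Q) by (apply (Htr F Q MF QF)).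
      exists Q; split; auto; split; auto. intros z Mz zO'.
      apply HO' in zO'. destruct zO' as [_ [y [[p0 [pf kp]] yQ]]].
      assert (My : M y) by (apply (Htr Q y MQ yQ)).
      assert (Mp : M p0) by (apply (Htr f p0 Mf pf)).
      exists y; split; auto; split; auto. exists p0; split; auto; split; auto.
      apply kpair_to_KPM; auto. }
    assert (Gs : forall O', mem O' G -> mem O' tau) by (intros O' H; apply G1; auto).
    assert (UG : forall z, mem z Os' <-> exists O', mem O' G /\ mem z O').
    { intro z; split.
      - intro zO. pose proof zO as zO2. apply HOs in zO2. destruct zO2 as [zX [y [fy yO]]].
        apply HO in yO. destruct yO as [Q [QF yQ]].
        destruct (Hcont Q (Fs Q QF)) as [O' [O't HO']].
        exists O'; split. apply (G2 Q); auto. apply HO'. eauto.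
      - intros [O' [O'G zO']]. destruct (G1 O' O'G) as [O't [Q [QF HQ]]].
        destruct (HQ z zO') as [y [yQ fy]]. apply HOs. split. apply (tauX O'); auto.
        exists y; split; auto. apply HO; eauto. }
    rewrite (base_inl Os' O p); auto. rewrite (unX G Os' MG Gs Ost UG p). split.
    - intros [O' [O'G pO']]. destruct (G1 O' O'G) as [O't [Q [QF HQ]]].
      destruct (Hcont Q (Fs Q QF)) as [O'' [O''t HO'']].
      exists Q; split; auto. rewrite (base_inl O'' Q p); auto.
      assert (HI : forall z, mem z O' <-> mem z O' /\ mem z O'').
      { intro z; split; [|tauto]. intro zO'. split; auto. apply HO''.
        destruct (HQ z zO') as [y [yQ fy]]. split. apply (tauX O'); auto. eauto. }
      apply (intX O' O'' O' O't O''t O't HI p) in pO'. tauto.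
    - intros [Q [QF [O' [O't [HO' pO']]]]]. exists O'; split; auto. apply (G2 Q); auto. }
  pose (prof := fun q P => mem P sigma /\ bs q P).
  pose (C := {N : U -> Prop | exists q, N = prof q}).
  pose (mkC := fun q => exist (fun N => exists q, N = prof q) (prof q) (ex_intro _ q eq_refl) : C).
  pose (tQ := fun (W : C -> Prop) => forall N, W N -> exists P, mem P sigma /\
          proj1_sig N P /\ forall N', proj1_sig N' P -> W N').
  pose (Q := {| carrier := C; topo := tQ; pi_pt := fun y => mkC (inr (pi_pt PY y));
                pi_op := fun P (N : C) => proj1_sig N P |}).
  assert (NP : forall (N : C) P, proj1_sig N P -> mem P sigma).
  { intros [N [q ->]] P [H _]; exact H. }
  assert (basic : forall P, tQ (fun N : C => proj1_sig N P)).
  { intros P N HN. exists P. split; [apply (NP N P HN) | split; auto]. }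
  assert (Cint : forall (N : C) P1 P2 P12, mem P1 sigma -> mem P2 sigma -> mem P12 sigma ->
     (forall z, mem z P12 <-> mem z P1 /\ mem z P2) ->
     (proj1_sig N P12 <-> proj1_sig N P1 /\ proj1_sig N P2)).
  { intros [N [q ->]] P1 P2 P12 s1 s2 s12 H12. simpl. unfold prof.
    rewrite (base_int q P1 P2 P12); tauto. }
  assert (HQ : preinterpretation mem M Y sigma Q).
  { split; [|split; [|split; [|split; [|split; [|split; [|split; [|split]]]]]]]; simpl.
    - split; [|split].
      + intros N _. exists Y. split; auto. split; [|intros; exact I].
        destruct N as [N [q ->]]; simpl. split; auto.
      + intros A B oA oB N [AN BN].
        destruct (oA N AN) as [P1 [s1 [N1 H1]]]. destruct (oB N BN) as [P2 [s2 [N2 H2]]].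
        destruct (Isig P1 P2 s1 s2) as [W [Ws HW]].
        exists W; split; auto; split.
        * apply (Cint N P1 P2 W); auto.
        * intros N' N'W. apply (Cint N' P1 P2 W) in N'W; auto. destruct N'W; split; auto.
      + intros F HF N [A [FA AN]]. destruct (HF A FA N AN) as [P [Ps [NP' HP]]].
        exists P; split; auto; split; auto. intros N' N'P. exists A; split; auto.
    - intros p q npq.
      assert (HP : exists P, ~ (proj1_sig p P <-> proj1_sig q P)).
      { apply NNPP; intro H. apply npq. destruct p as [Np hp], q as [Nq hq]; simpl in H.
        assert (Np = Nq).
        { apply functional_extensionality; intro P; apply propositional_extensionality.
          apply NNPP; intro H'. apply H; eauto. }
        subst Nq. f_equal. apply proof_irrelevance. }
      destruct HP as [P HP]. exists (fun N : C => proj1_sig N P). split; auto.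
    - intros y P yY Ps. simpl. unfold prof. simpl. split.
      + intro. split; auto. apply memY; auto.
      + intros [_ H]. apply memY; auto.
    - intros. apply Cint; auto.
    - intros F O MF Fs Os HO N. destruct N as [N [q ->]]. simpl. unfold prof.
      rewrite (base_U q F O); auto. split.
      + intros [_ [Q' [QF b]]]. exists Q'; split; auto.
      + intros [Q' [QF [_ b]]]. split; eauto.
    - intros E Es HE N. destruct N as [N [q ->]]; simpl. intros [_ b]. apply (base_E q E); auto.
    - intros N. destruct N as [N [q ->]]; simpl. split; auto.
    - intros P Ps. apply basic.
    - intros W oW N WN. destruct (oW N WN) as [P [Ps [NP' HP]]]. exists P; auto. }
  destruct (PYmax Q HQ) as [h [hpt hop]].
  pose (fh := fun p => h (mkC (inl p))).
  assert (key : forall P p, mem P sigma -> (pi_op PY P (fh p) <-> bs (inl p) P)).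
  { intros P p Ps. unfold fh. rewrite (hop P Ps). simpl. unfold prof. tauto. }
  assert (cont : continuous_map (topo PX) (topo PY) fh).
  { intros B oB. apply open_local; auto. intros p Bp.
    destruct (basisY B oB (fh p) Bp) as [P [Ps [Pp PB]]].
    destruct (Hcont P Ps) as [O [Ot HO]].
    exists (pi_op PX O). split; [apply basX; auto|split].
    - rewrite <- (base_inl O P p); auto. apply key; auto.
    - intros q Oq. apply PB. apply key; auto. rewrite (base_inl O P q); auto. }
  assert (ext : forall x y, mem x X -> mem y Y -> fapp mem f x y -> fh (pi_pt PX x) = pi_pt PY y).
  { intros x y xX yY fxy. apply (pts_eq _ _ _ _ _ PYpre). intros P Ps. rewrite key; auto.
    destruct (Hcont P Ps) as [O [Ot HO]]. rewrite (base_inl O P); auto.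
    rewrite <- (memX x O xX Ot), <- (memY y P yY Ps), (HO x).
    destruct (fval x xX) as [y0 [_ [_ uy]]]. split.
    - intros [_ [y' [fy' y'P]]]. rewrite (uy y' fy') in y'P. rewrite <- (uy y fxy) in y'P. auto.
    - intro yP. split; eauto. }
  exists fh. split; [split; auto | split].
  - intros g gc gext. apply functional_extensionality; intro p. apply NNPP; intro ne.
    destruct (haus _ _ _ _ _ HZ HTY HRY PYpre (g p) (fh p) ne) as [A [B [oA [oB [Ag [Bf dis]]]]]].
    pose proof (proj1 (proj2 topX) _ _ (gc A oA) (cont B oB)) as oS.
    destruct (basisX _ oS p (conj Ag Bf)) as [O [Ot [Op OS]]].
    destruct (classic (exists x, mem x O)) as [[x xO] | nO].
    + pose proof (tauX O Ot x xO) as xX. destruct (fval x xX) as [y [yY [fxy _]]].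
      destruct (OS (pi_pt PX x)) as [A1 B1]. { apply memX; auto. }
      rewrite (gext x y xX yY fxy) in A1. rewrite (ext x y xX yY fxy) in B1.
      apply (dis (pi_pt PY y)); auto.
    + apply (empX O Ot) with p; [intros z zO; apply nO; eauto | auto].
  - intros O P Ot Ps HO p. rewrite (key P p Ps). apply base_inl; auto.
Qed.
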